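(* Fix $s,k,g$ and let $S$ be an $(s,k)$-schedule with at most $g$ gaps and $C_{\max}(S)=U_{s,k,g}$. Then $S$ is frugal.
   Context: Time is discrete (slots $[t,t+1)$). There are $n$ jobs, job $j$ with integer processing time $p_j\ge1$, release time $r_j$, deadline $d_j$; jobs are indexed so that $d_1<\dots<d_n$, release times are pairwise distinct, and the instance is feasible. A (partial, preemptive) schedule assigns to each slot at most one job so that each job it schedules receives exactly $p_j$ slots in $[r_j,d_j)$, and has the earliest-deadline property (whenever busy at slot $t$, it runs the released, not yet completed job of smallest deadline among those it schedules). $C_{\max}(S)$ is its completion time. For $s\in\{1,\dots,n\}$, $k\in\{0,\dots,n\}$, an $(s,k)$-schedule is a schedule $S$ with $C_{\max}(S)\le d_k$ scheduling exactly the jobs $j\le k$ with $r_s\le r_j<C_{\max}(S)$; the empty schedule counts, with $C_{\max}=r_s$. Gaps of an $(s,k)$-schedule: maximal idle intervals between its blocks (maximal busy intervals), plus the idle interval from $r_s$ to the first block if nonempty. $U_{s,k,g}$ is the maximum of $C_{\max}(S)$ over $(s,k)$-schedules with at most $g$ gaps. An execution interval of job $k$ in $S$ is an inclusion-maximal interval $[u,v)$ all of whose slots execute $k$. An $(s,k)$-schedule $S$ is frugal if (f1) no job $j\le k$ has $r_j=C_{\max}(S)$, and (f2) if $C_{\max}(S)<d_k$ and $S$ schedules $k$, then for every execution interval $[u,v)$ of $k$ the slot $u-1$ is not idle, and if slot $v$ is idle then $v=C_{\max}(S)$. *)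

(* Defs.v *)
From mathcomp Require Import all_boot.
Set Implicit Arguments. Unset Strict Implicit. Unset Printing Implicit Defensive.

(* Jobs are the naturals 1..n; p r d : nat -> nat give processing times,
   release times, deadlines (values at indices outside 1..n are irrelevant).
   Time slots are naturals; slot t is [t,t+1).
   A (partial) schedule is S : nat -> option nat, S t = Some j meaning slot t
   executes job j, S t = None meaning slot t is idle. *)

Section Sched.
Variables (n : nat) (p r d : nat -> nat).

Definition is_job (j : nat) : Prop := 1 <= j <= n.

Definition sched_job (S : nat -> option nat) (j : nat) : Prop :=
  exists t, S t = Some j.

Definition busy (S : nat -> option nat) (t : nat) : Prop := S t <> None.

Definition done_before (S : nat -> option nat) (j t : nat) : nat :=
  \sum_(0 <= t' < t) (S t' == Some j).

(* a (partial, preemptive, earliest-deadline) schedule *)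
Definition schedule (S : nat -> option nat) : Prop :=
  [/\ (forall t j, S t = Some j -> is_job j /\ r j <= t < d j),
      (forall j, sched_job S j -> \sum_(r j <= t < d j) (S t == Some j) = p j)
    & (forall t j i, S t = Some j -> sched_job S i -> r i <= t ->
         done_before S i t < p i -> d j <= d i)].

Definition feasible : Prop :=
  exists S, schedule S /\ forall j, is_job j -> sched_job S j.

Definition cmax_is (s : nat) (S : nat -> option nat) (C : nat) : Prop :=
  (exists t, busy S t /\ C = t.+1 /\ forall t', busy S t' -> t' < C)
  \/ ((forall t, S t = None) /\ C = r s).

Definition sk_schedule (s k : nat) (S : nat -> option nat) (C : nat) : Prop :=
  [/\ schedule S, cmax_is s S C, C <= d k
    & forall j, sched_job S j <-> (1 <= j <= k /\ r s <= r j < C)].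

Definition idle (s : nat) (S : nat -> option nat) (t : nat) : Prop :=
  r s <= t /\ S t = None.

(* number of gaps: each gap (maximal idle interval, either between two blocks
   or from r_s to the first block) is counted by its last slot t, which is
   idle with t+1 busy; all such t lie in [r_s, C). *)
Definition ngaps (s : nat) (S : nat -> option nat) (C : nat) : nat :=
  \sum_(r s <= t < C) ((S t == None) && (S t.+1 != None)).

Definition is_U (s k g u : nat) : Prop :=
  (exists S C, [/\ sk_schedule s k S C, ngaps s S C <= g & C = u])
  /\ (forall S C, sk_schedule s k S C -> ngaps s S C <= g -> C <= u).

Definition exec_interval (S : nat -> option nat) (k u v : nat) : Prop :=
  [/\ u < v, (forall t, u <= t < v -> S t = Some k),
      (0 < u -> S u.-1 <> Some k) & S v <> Some k].

Definition frugal (s k : nat) (S : nat -> option nat) (C : nat) : Prop :=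
  (forall j, 1 <= j <= k -> r j <> C)
  /\ (C < d k -> sched_job S k ->
      forall u v, exec_interval S k u v ->
        (0 < u -> ~ idle s S u.-1) /\ (idle s S v -> v = C)).

End Sched.

(* Main.v *)
Require Import Defs.
From mathcomp Require Import all_boot.
From mathcomp Require Import zify.
Set Implicit Arguments. Unset Strict Implicit. Unset Printing Implicit Defensive.


Lemma sum_zero (f : nat -> nat) a b :
  (forall t, a <= t < b -> f t = 0) -> \sum_(a <= t < b) f t = 0.
Proof. by move=> H; rewrite big1_seq // => t /andP[_]; rewrite mem_index_iota => /H. Qed.

Lemma sum_window (f : nat -> nat) a b lo hi :
  (forall t, 0 < f t -> lo <= t < hi) -> a <= lo -> lo <= hi -> hi <= b ->
  \sum_(a <= t < b) f t = \sum_(lo <= t < hi) f t.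
Proof.
move=> H al lh hb.
rewrite (big_cat_nat (n := lo)) /=; [|lia|lia].
rewrite (big_cat_nat (n := hi) (m := lo)) /=; [|lia|lia].
rewrite (@sum_zero f a lo) ?(@sum_zero f hi b) ?add0n ?addn0 // => t ht;
  apply/eqP; rewrite -leqn0 leqNgt; apply/negP => /H; lia.
Qed.

Lemma sum_eq1 a b x : a <= x < b -> \sum_(a <= t < b) (t == x) = 1.
Proof.
move=> /andP[ax xb].
rewrite (@sum_window (fun t => (t == x) : nat) a b x x.+1) //.
- by rewrite big_nat1 eqxx.
- by move=> t; case: eqP => // -> _; rewrite leqnn ltnSn.
Qed.

Lemma sum_le1 a b x : \sum_(a <= t < b) (t == x) <= 1.
Proof.
case: (boolP (a <= x < b)) => h; first by rewrite sum_eq1.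
rewrite sum_zero // => t ht; apply/eqP; rewrite eqb0; apply/eqP => e; subst; by rewrite ht in h.
Qed.

Lemma sum_pos_ex (f : nat -> nat) a b :
  0 < \sum_(a <= t < b) f t -> exists2 t, a <= t < b & 0 < f t.
Proof.
case: (boolP (has (fun t => 0 < f t) (index_iota a b))).
  by move=> /hasP[t]; rewrite mem_index_iota => h1 h2; exists t.
move=> /hasPn H; rewrite sum_zero // => t ht.
have := H t; rewrite mem_index_iota ht => /(_ isT); lia.
Qed.

Fixpoint firstm (P : pred nat) (lo c : nat) : option nat :=
  if c is c'.+1 then (if P lo then Some lo else firstm P lo.+1 c') else None.

Lemma firstm_some P lo c m : firstm P lo c = Some m ->
  [/\ P m, lo <= m < lo + c & forall m', lo <= m' < m -> ~~ P m'].
Proof.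
elim: c lo => [|c IH] lo //=.
case: ifP => Plo.
  case=> <-; split => //; first lia. move=> m'; lia.
move=> /IH [Pm hm hlt]; split => //; first lia.
move=> m' hm'; have [->|ne] := eqVneq m' lo; first by rewrite Plo.
apply: hlt; lia.
Qed.

Lemma firstm_none P lo c : firstm P lo c = None -> forall m, lo <= m < lo + c -> ~~ P m.
Proof.
elim: c lo => [|c IH] lo //=; first by move=> _ m; lia.
case: ifP => // Plo /IH H m hm.
have [->|ne] := eqVneq m lo; first by rewrite Plo.
apply: H; lia.
Qed.


Definition candP (r : nat -> nat) (C t : nat) (R : nat -> nat) : pred nat :=
  fun m => [&& C <= r m, r m <= t & 0 < R m].
Definition pickj r k C (R : nat -> nat) t := firstm (candP r C t R) 1 k.
Fixpoint remw p r k C t : nat -> nat :=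
  if t is t'.+1 then
    (fun m => remw p r k C t' m - (pickj r k C (remw p r k C t') t' == Some m))
  else p.
Definition Esch p r k C t := pickj r k C (remw p r k C t) t.

Lemma remS p r k C t m :
  remw p r k C t.+1 m = remw p r k C t m - (Esch p r k C t == Some m).
Proof. by []. Qed.

Lemma E_some p r k C t m : Esch p r k C t = Some m ->
  [/\ 1 <= m <= k, C <= r m <= t, 0 < remw p r k C t m &
   forall m', 1 <= m' < m -> ~~ candP r C t (remw p r k C t) m'].
Proof.
rewrite /Esch /pickj => /firstm_some [/and3P[h1 h2 h3] h4 h5]; split => //; lia.
Qed.

Lemma E_none p r k C t : Esch p r k C t = None ->
  forall m, 1 <= m <= k -> C <= r m <= t -> remw p r k C t m = 0.
Proof.
rewrite /Esch /pickj => /firstm_none H m hm /andP[h1 h2].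
have := H m; rewrite /candP h1 h2 /=; move=> /(_ ltac:(lia)); lia.
Qed.

Lemma E_edf p r k C t a i : Esch p r k C t = Some a -> 1 <= i <= k ->
  C <= r i <= t -> 0 < remw p r k C t i -> a <= i.
Proof.
move=> /E_some [_ _ _ H] hi /andP[h1 h2] h3.
rewrite leqNgt; apply/negP => hia.
have := H i ltac:(lia); by rewrite /candP h1 h2 h3.
Qed.

Lemma rem_sum p r k C t m :
  remw p r k C t m + \sum_(0 <= tau < t) (Esch p r k C tau == Some m) = p m.
Proof.
elim: t => [|t IH]; first by rewrite big_geq // addn0.
rewrite remS big_nat_recr //.
case: (eqVneq (Esch p r k C t) (Some m)) => h /=.
  have [_ _ pos _] := E_some h. lia.
lia.
Qed.

Lemma rem_range p r k C t1 t2 m : t1 <= t2 ->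
  remw p r k C t1 m = remw p r k C t2 m + \sum_(t1 <= tau < t2) (Esch p r k C tau == Some m).
Proof.
move=> h.
have e1 := rem_sum p r k C t1 m. have e2 := rem_sum p r k C t2 m.
rewrite (big_cat_nat (n := t1)) //= in e2. lia.
Qed.

Lemma rem_mono p r k C t1 t2 m : t1 <= t2 -> remw p r k C t2 m <= remw p r k C t1 m.
Proof. move=> h; rewrite (rem_range p r k C m h); lia. Qed.

Lemma E_rel p r k C t m : Esch p r k C t = Some m -> C <= r m <= t.
Proof. by case/E_some. Qed.

Lemma rem_early p r k C t m : t <= r m -> remw p r k C t m = p m.
Proof.
move=> h; have := rem_sum p r k C t m.
rewrite sum_zero ?addn0 // => tau ht.
case: eqP => // /E_rel; lia.
Qed.


Lemma deadline n p r d k C (F : nat -> option nat)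
  (d_incr : forall i j, 1 <= i -> i < j -> j <= n -> d i < d j)
  (hF : schedule n p r d F) (Fall : forall j, is_job n j -> sched_job F j)
  (hk : k <= n) i (hi : 1 <= i <= k) (hCi : C <= r i) :
  remw p r k C (d i) i = 0.
Proof.
case: hF => Fwin Fsum _.
set E := Esch p r k C. set R := remw p r k C.
apply/eqP; rewrite -leqn0 leqNgt; apply/negP => pos.
have [t0F Ft0] : sched_job F i by apply: Fall; rewrite /is_job; lia.
have [_ /andP[ri di]] := Fwin _ _ Ft0.
set D := d i in pos di *.
pose goodb t := if E t is Some a then a <= i else false.
have goodD : forall t, r i <= t < D -> goodb t.
  move=> t ht.
  have pt : 0 < R t i by apply: leq_trans pos (rem_mono p r k C i _); lia.
  rewrite /goodb; case Et: (E t) => [a|].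
    by apply: (E_edf Et) => //; lia.
  by have := E_none Et hi ltac:(lia); rewrite -/R; lia.
pose P t := (C <= t) && all goodb (index_iota t D).
have exP : exists t, P t.
  exists (r i); rewrite /P hCi /=; apply/allP => t; rewrite mem_index_iota; exact: goodD.
case: (ex_minnP exP) => t0 Pt0 minP.
move: (Pt0) => /andP[Ct0 /allP allg].
have t0ri : t0 <= r i.
  apply: minP; rewrite /P hCi /=; apply/allP => t; rewrite mem_index_iota; exact: goodD.
have Z : forall m, 1 <= m <= i -> C <= r m -> r m < t0 -> R t0 m = 0.
  move=> m hm hCm hmt.
  have ng : ~~ goodb t0.-1.
    apply/negP => g.
    have : P t0.-1.
      rewrite /P; apply/andP; split; first lia.
      apply/allP => t; rewrite mem_index_iota => ht.
      have [->|ne] := eqVneq t t0.-1; first exact: g.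
      apply: allg; rewrite mem_index_iota; lia.
    move=> /minP; lia.
  apply/eqP; rewrite -leqn0; apply: leq_trans (rem_mono p r k C m (leq_pred t0)) _.
  rewrite leqn0; apply/eqP; apply/eqP; rewrite -leqn0 leqNgt; apply/negP => pm.
  move: ng; rewrite /goodb; case Et: (E t0.-1) => [a|].
    have am : a <= m by apply: (E_edf Et) => //; lia.
    by move=> /negP; apply; lia.
  have := E_none Et (m := m) ltac:(lia) ltac:(lia); move: pm; rewrite /R; lia.
have W : forall t, t0 <= t < D -> exists a, E t = Some a /\
     [&& 1 <= a, a <= i, C <= r a & t0 <= r a].
  move=> t ht.
  have := allg t; rewrite mem_index_iota ht => /(_ isT).
  rewrite /goodb; case Et: (E t) => [a|] // ai.
  have [ha /andP[hra1 hra2] pa _] := E_some Et.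
  exists a; split => //.
  apply/and4P; split; try lia.
  rewrite leqNgt; apply/negP => hlt.
  have := Z a ltac:(lia) hra1 hlt.
  have := rem_mono p r k C a (ltac:(lia) : t0 <= t); move: pa; rewrite /R; lia.
pose A m := (C <= r m) && (t0 <= r m).
have Ai : A i by rewrite /A hCi t0ri.
have eq1 : D - t0 = \sum_(1 <= m < i.+1 | A m) (R t0 m - R D m).
  have -> : D - t0 = \sum_(t0 <= t < D) 1 by rewrite sum_nat_const_nat muln1.
  rewrite (@eq_big_nat _ _ _ t0 D _ (fun t => \sum_(1 <= m < i.+1 | A m) (E t == Some m))); last first.
    move=> t ht; have [a [Et /and4P[h1 h2 h3 h4]]] := W t ht.
    rewrite big_mkcond /= (eq_bigr (fun m => (m == a) : nat)); first by rewrite sum_eq1 //; lia.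
    move=> m _; rewrite Et; case: eqP => [[<-]|]; first by rewrite /A h3 h4 eqxx.
    by case: (A m) => //; case: eqP => // ->.
  rewrite exchange_big /=; apply: eq_bigr => m _.
  have := rem_range p r k C m (ltac:(lia) : t0 <= D); rewrite -/R -/E; lia.
have le1 : \sum_(1 <= m < i.+1 | A m) (R t0 m - R D m) + 1 <= \sum_(1 <= m < i.+1 | A m) p m.
  have e1 : \sum_(1 <= m < i.+1 | A m) ((m == i) : nat) = 1.
    rewrite big_mkcond /= (eq_bigr (fun m => (m == i) : nat)); first by rewrite sum_eq1 //; lia.
    by move=> m _; case: eqP => [->|]; rewrite ?Ai //; case: (A m).
  rewrite -[X in _ + X <= _]e1 -big_split /=; apply: leq_sum => m _.
  have := rem_sum p r k C t0 m; rewrite -/R.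
  case: eqP => [->|_] h; last lia.
  have := rem_mono p r k C i (ltac:(lia) : t0 <= D); move: pos h; rewrite /R /=; lia.
have le2 : \sum_(1 <= m < i.+1 | A m) p m <= D - t0.
  have -> : \sum_(1 <= m < i.+1 | A m) p m =
            \sum_(1 <= m < i.+1 | A m) \sum_(t0 <= t < D) ((F t == Some m) : nat).
    rewrite big_nat_cond [RHS]big_nat_cond; apply: eq_bigr => m /andP[hm Am].
    move: Am; rewrite /A => /andP[Cm tm].
    have jm : is_job n m by rewrite /is_job; lia.
    have dm : d m <= D.
      have [->|ne] := eqVneq m i; first by [].
      apply: ltnW; apply: d_incr; lia.
    have [tm' Ftm'] := Fall m jm.
    have [_ /andP[h1 h2]] := Fwin _ _ Ftm'.
    rewrite -(Fsum m (Fall m jm)); symmetry; apply: sum_window; try lia.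
    by move=> t; case: eqP => // /Fwin [_ ht] _.
  rewrite exchange_big /=.
  have -> : D - t0 = \sum_(t0 <= t < D) 1 by rewrite sum_nat_const_nat muln1.
  apply: leq_sum => t _.
  case: (F t) => [a|]; last by rewrite big1.
  rewrite big_mkcond /=; apply: leq_trans (sum_le1 1 i.+1 a).
  apply: leq_sum => m _; case: (A m) => //.
  by case: eqP => [[->]|]; rewrite ?eqxx.
lia.
Qed.


Lemma skA n p r d s k S C : sk_schedule n p r d s k S C ->
  forall t j, S t = Some j ->
  [/\ 1 <= j <= k, r s <= r j < C, r j <= t < d j & t < C].
Proof.
case=> [[win _ _] cm _ sj] t j Stj.
have sjj : sched_job S j by exists t.
have [_ ht] := win _ _ Stj.
have [h1 h2] := (sj j).1 sjj.
split => //.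
case: cm => [[t' [_ [-> H]]]|[H _]]; first by apply: H; rewrite /busy Stj.
by rewrite H in Stj.
Qed.

Lemma skB n p r d s k S C : sk_schedule n p r d s k S C ->
  forall t, C <= t -> S t = None.
Proof.
move=> hS t ht; case Et: (S t) => [j|] //.
have [_ _ _ h] := skA hS Et; lia.
Qed.

Lemma skC n p r d s k S C : sk_schedule n p r d s k S C -> r s <= C.
Proof.
move=> hS; case: (hS) => _ cm _ _.
case: cm => [[t' [bt [e _]]]|[_ ->]] //.
case Et: (S t') => [j|]; last by rewrite /busy Et in bt.
have [_ h _ h2] := skA hS Et; lia.
Qed.

Lemma skD n p r d s k S C : sk_schedule n p r d s k S C -> r s < C -> S C.-1 <> None.
Proof.
case=> _ cm _ _ h.
case: cm => [[t' [bt [-> _]]]|[_ e]] //; lia.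
Qed.

Lemma skFull n p r d s k S C : sk_schedule n p r d s k S C ->
  forall i t, sched_job S i -> C <= t -> done_before S i t = p i.
Proof.
move=> hS i t [t1 St1] ht.
case: (hS) => [[win sums _] _ _ _].
have [_ _ /andP[h1 h2] h3] := skA hS St1.
rewrite /done_before -(sums i (ex_intro _ t1 St1)).
rewrite (@sum_window _ 0 t (r i) (minn (d i) C)); try lia.
  symmetry; apply: sum_window; try lia.
  by move=> t'; case: eqP => // /(skA hS) [_ _ h h'] _; lia.
by move=> t'; case: eqP => // /(skA hS) [_ _ h h'] _; lia.
Qed.


Lemma f1 n p r d s k g u S C
  (p_pos : forall j, 1 <= j <= n -> 1 <= p j)
  (d_incr : forall i j, 1 <= i -> i < j -> j <= n -> d i < d j)
  (feas : feasible n p r d) (hk : k <= n)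
  (hS : sk_schedule n p r d s k S C) (hg : ngaps r s S C <= g)
  (hU : is_U n p r d s k g u) (hCu : C = u) :
  forall j, 1 <= j <= k -> r j <> C.
Proof.
move=> j hj rjC.
case: feas => F [hF Fall].
have dl := deadline (C := C) d_incr hF Fall hk.
set E := Esch p r k C.
have Edl : forall t m, E t = Some m ->
    [/\ 1 <= m <= k, C <= r m <= t, 0 < remw p r k C t m & t < d m].
  move=> t m Et; have [h1 h2 h3 _] := E_some Et; split => //.
  rewrite ltnNge; apply/negP => dt.
  have := rem_mono p r k C m dt; rewrite (dl m) //; last lia.
  lia.
have EC : E C <> None.
  move=> Et; have := E_none Et hj ltac:(lia).
  rewrite rem_early; last lia.
  have := p_pos j ltac:(lia); lia.
have dkm : forall m, 1 <= m <= k -> d m <= d k.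
  move=> m hm; have [->|ne] := eqVneq m k; first by [].
  apply: ltnW; apply: d_incr; lia.
have Cdk : C <= d k by case: hS.
pose P t := (C <= t) && (E t == None).
have exP : exists t, P t.
  exists (d k); rewrite /P Cdk /=; case Et: (E (d k)) => [m|] //.
  have [h1 _ _ h4] := Edl _ _ Et; have := dkm m h1; lia.
case: (ex_minnP exP) => C' /andP[CC' /eqP EC'] minP.
have CltC' : C < C'.
  rewrite ltn_neqAle CC' andbT; apply/eqP => e; by rewrite -e in EC'.
have busyE : forall t, C <= t < C' -> E t <> None.
  move=> t ht Et; have := minP t; rewrite /P; move=> /(_ ltac:(apply/andP; split; [lia|by apply/eqP])); lia.
have C'dk : C' <= d k.
  apply: minP; rewrite /P; apply/andP; split => //; case Et: (E (d k)) => [m|] //.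
  have [h1 _ _ h4] := Edl _ _ Et; have := dkm m h1; lia.
have remC' : forall m, 1 <= m <= k -> C <= r m < C' -> remw p r k C C' m = 0.
  move=> m hm hr; apply: (E_none EC') => //; lia.
pose S2 t := if t < C then S t else if t < C' then E t else None.
have Enone : forall t, t < C -> E t = None.
  move=> t ht; case Et: (E t) => [m|] //; have [_ h _ _] := Edl _ _ Et; lia.
have PS : forall m t, r m < C -> (S2 t == Some m) = (S t == Some m).
  move=> m t hm; rewrite /S2; case: ltnP => ht //.
  rewrite (skB hS ht); case: ltnP => // _.
  case Et: (E t) => [a|] //; case: eqP => // [[e]]; subst a.
  have [_ h _ _] := Edl _ _ Et; lia.
have PE : forall m t, 1 <= m <= k -> C <= r m < C' -> (S2 t == Some m) = (E t == Some m).
  move=> m t hm hr; rewrite /S2; case: ltnP => ht.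
    rewrite (Enone t ht); case: eqP => // /(skA hS) [_ h _ _]; lia.
  case: ltnP => ht' //.
  symmetry; apply/eqP => Et.
  have [_ _ h _] := Edl _ _ Et.
  have := rem_mono p r k C m ht'; rewrite (remC' m hm hr); lia.
have sjS : forall j, sched_job S j <-> (1 <= j <= k /\ r s <= r j < C) by case: hS.
have S2src : forall t m, S2 t = Some m ->
    (t < C /\ S t = Some m) \/ (C <= t < C' /\ E t = Some m).
  move=> t m; rewrite /S2; case: ltnP => h1; first by left.
  case: ltnP => h2 // e; right; split => //; lia.
have schE : forall m, 1 <= m <= k -> C <= r m < C' -> exists2 t, C <= t < C' & E t = Some m.
  move=> m hm hr.
  have := rem_range p r k C m (ltac:(lia) : r m <= C').
  rewrite rem_early // (remC' m hm hr) add0n => e.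
  have := p_pos m ltac:(lia); rewrite e => /sum_pos_ex [t ht]; case: eqP => // Et _.
  exists t => //; have [_ h _ _] := Edl _ _ Et; lia.
have sj2 : forall m, sched_job S2 m <-> (1 <= m <= k /\ r s <= r m < C').
  move=> m; split.
    move=> [t /S2src [[ht St]|[ht Et]]].
      have [h1 h2 _ _] := skA hS St; split => //; lia.
    have [h1 h2 _ _] := Edl _ _ Et; have := skC hS; split => //; lia.
  move=> [hm hr]; case: (ltnP (r m) C) => hrC.
    have hh : r s <= r m < C by lia.
    have [t St] := (sjS m).2 (conj hm hh).
    exists t; rewrite /S2; have [_ _ _ ht] := skA hS St; by rewrite ht.
  have [t ht Et] := schE m hm ltac:(lia).
  exists t; rewrite /S2; case: ltnP => h1; first lia.
  case: ltnP => h2 //; lia.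
have sk2 : sk_schedule n p r d s k S2 C'.
  case: (hS) => [[win sums edf] cm _ _].
  split => //.
  - split.
    + move=> t m /S2src [[ht St]|[ht Et]]; first exact: win.
      have [h1 h2 _ h4] := Edl _ _ Et; split; [rewrite /is_job; lia | lia].
    + move=> m sm; have [hm hr] := (sj2 m).1 sm.
      case: (ltnP (r m) C) => hrC.
        rewrite (eq_bigr (fun t => (S t == Some m) : nat)); last by move=> t _; rewrite PS.
        by apply: sums; apply/(sjS m); split => //; lia.
      rewrite (eq_bigr (fun t => (E t == Some m) : nat)); last by move=> t _; rewrite PE //; lia.
      have [t ht Et] := schE m hm ltac:(lia).
      have [_ h2 _ h4] := Edl _ _ Et.
      have := rem_range p r k C m (ltac:(lia) : r m <= d m).
      rewrite rem_early // dl //; lia.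
    + move=> t a i St2 si rit dbi.
      have [hi hri] := (sj2 i).1 si.
      case: (ltnP (r i) C) => hiC.
        have edb : done_before S2 i t = done_before S i t.
          by rewrite /done_before; apply: eq_bigr => tau _; rewrite PS.
        rewrite edb in dbi.
        have siS : sched_job S i by apply/(sjS i); split => //; lia.
        case: (S2src _ _ St2) => [[ht St]|[ht Et]].
          exact: edf t a i St siS rit dbi.
        by rewrite (skFull hS siS (ltac:(lia) : C <= t)) ltnn in dbi.
      have edb : done_before S2 i t = \sum_(0 <= tau < t) (E tau == Some i).
        by rewrite /done_before; apply: eq_bigr => tau _; rewrite PE //; lia.
      have := rem_sum p r k C t i; rewrite -/E -edb => e.
      case: (S2src _ _ St2) => [[ht St]|[ht Et]]; first lia.
      have ai : a <= i by apply: (E_edf Et) => //; lia.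
      have [ha _ _ _] := Edl _ _ Et.
      have [->|ne] := eqVneq a i; first done.
      apply: ltnW; apply: d_incr; lia.
  - left; exists C'.-1; split.
      rewrite /busy /S2; case: ltnP => h1; first lia.
      case: ltnP => h2; last lia.
      apply: busyE; lia.
    split; first lia.
    move=> t'; rewrite /busy /S2; case: ltnP => h1; first lia.
    by case: ltnP.
have ng2 : ngaps r s S2 C' <= g.
  have rsC := skC hS.
  rewrite /ngaps (big_cat_nat (n := C)) /=; [|lia|lia].
  rewrite (@sum_zero _ C C') ?addn0.
    apply: leq_trans hg; rewrite /ngaps; apply: eq_leq; apply: eq_big_nat => t ht.
    rewrite /S2 (_ : t < C); last lia.
    case: (ltnP t.+1 C) => h //.
    have e : t = C.-1 by lia.
    have := skD hS ltac:(lia); rewrite -e; case: (S t) => //.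
  move=> t ht; rewrite /S2; case: ltnP => h1; first lia.
  case: ltnP => h2; last lia.
  by case Et: (E t) => //; have := busyE t ltac:(lia).
have := hU.2 S2 C' sk2 ng2; lia.
Qed.


Lemma shift n p r d s k g u S C
  (d_incr : forall i j, 1 <= i -> i < j -> j <= n -> d i < d j)
  (hk : k <= n)
  (hS : sk_schedule n p r d s k S C) (hg : ngaps r s S C <= g)
  (hU : is_U n p r d s k g u) (hCu : C = u)
  (hf1 : forall j, 1 <= j <= k -> r j <> C) (hCd : C < d k)
  x (Sx : S x = Some k)
  (cond : (0 < x /\ r s <= x.-1 /\ S x.-1 = None) \/ (x.+1 < C /\ S x.+1 = None)) :
  False.
Proof.
have [hkk hrk hwin hxC] := skA hS Sx.
have SC : S C = None := skB hS (leqnn C).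
have xC : (x == C) = false by apply/eqP; lia.
pose S3 t := if t == x then None else if t == C then Some k else S t.
have PS3 : forall m t, m != k -> (S3 t == Some m) = (S t == Some m).
  move=> m t mk; rewrite /S3; case: (eqVneq t x) => [->|_].
    by rewrite Sx; apply/esym/eqP => -[e]; rewrite e eqxx in mk.
  case: (eqVneq t C) => [->|_] //; rewrite SC.
  by apply/eqP => -[e]; rewrite e eqxx in mk.
have PK : forall t, (S3 t == Some k) + (t == x) = (S t == Some k) + (t == C).
  move=> t; rewrite /S3; case: (eqVneq t x) => [->|tx].
    by rewrite Sx xC !eqxx.
  case: (eqVneq t C) => [->|tC]; first by rewrite SC !eqxx.
  by rewrite !addn0.
have S3C : S3 C = Some k by rewrite /S3 eq_sym xC eqxx.
have sj3 : forall m, sched_job S3 m <-> sched_job S m.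
  move=> m; case: (eqVneq m k) => [->|mk].
    by split => _; [exists x | exists C].
  split => -[t St]; exists t; apply/eqP.
    by rewrite -PS3 // St.
  by rewrite PS3 // St.
case: (hS) => [[win sums edf] cm _ sjS].
have sk3 : sk_schedule n p r d s k S3 C.+1.
  split.
  - split.
    + move=> t m; rewrite /S3; case: eqP => // tx; case: eqP => [-> [<-]|_]; last exact: win.
      have [h1 _] := win _ _ Sx; split => //; lia.
    + move=> m sm; case: (eqVneq m k) => [->|mk].
        have := sums k (ex_intro _ x Sx).
        have e : \sum_(r k <= t < d k) ((S3 t == Some k) + (t == x)) =
                 \sum_(r k <= t < d k) ((S t == Some k) + (t == C)).
          by apply: eq_bigr => t _; exact: PK t.
        rewrite !big_split /= !sum_eq1 in e; try lia.
      rewrite (eq_bigr (fun t => (S t == Some m) : nat)); last by move=> t _; rewrite PS3.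
      by apply: sums; apply/sj3.
    + move=> t a i St3 si rit dbi.
      have siS := (sj3 i).1 si.
      have [hi _] := (sjS i).1 siS.
      have aS : sched_job S a by apply/sj3; exists t.
      have [ha _] := (sjS a).1 aS.
      case: (eqVneq i k) => [->|ik].
        have [->|ne] := eqVneq a k; first done.
        apply: ltnW; apply: d_incr; lia.
      have edb : done_before S3 i t = done_before S i t.
        by rewrite /done_before; apply: eq_bigr => tau _; rewrite PS3.
      rewrite edb in dbi.
      move: St3; rewrite /S3; case: eqP => // tx; case: eqP => [tC _|tC St].
        by rewrite tC (skFull hS siS (leqnn C)) ltnn in dbi.
      exact: edf t a i St siS rit dbi.
  - left; exists C; split; first by rewrite /busy S3C.
    split => // t'; rewrite /busy /S3; case: eqP => // _; case: eqP => [->|tC] // St.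
    rewrite ltnNge; apply/negP => h; by rewrite (skB hS (ltnW h)) in St.
  - exact: hCd.
  - move=> m; rewrite sj3 sjS; split => [[h1 h2]|[h1 h2]]; split => //; try lia.
    have := hf1 m h1; lia.
have ng3 : ngaps r s S3 C.+1 <= g.
  have rsC : r s < C by lia.
  have SCm1 := skD hS rsC.
  rewrite /ngaps big_nat_recr /=; last lia.
  rewrite S3C /= addn0; apply: leq_trans hg; rewrite /ngaps.
  case: cond => [[x0 [rsx Sxm1]]|[x1C Sx1]].
  - have e1 : \sum_(r s <= t < C) ((t.+1 == x) : nat) = 1.
      rewrite (eq_bigr (fun t => (t == x.-1) : nat)).
        by rewrite sum_eq1 //; lia.
      by move=> t _; rewrite -{1}(prednK x0) eqSS.
    have e2 : \sum_(r s <= t < C) ((t == x) : nat) = 1 by rewrite sum_eq1 //; lia.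
    rewrite -(leq_add2r 1) -[X in _ + X <= _]e1 -[X in _ <= _ + X]e2 -!big_split /=.
    rewrite big_nat_cond [X in _ <= X]big_nat_cond; apply: leq_sum => t /andP[ht _].
    rewrite /S3 (_ : (t == C) = false); last by apply/eqP; lia.
    case: (eqVneq t x) => [->|tx].
      rewrite Sx !eqxx /= (_ : (x.+1 == x) = false); last by apply/eqP; lia.
      by case: ifP => _; [|case: (S x.+1)].
    case: (eqVneq t.+1 x) => [t1x|t1x].
      have e : t = x.-1 by lia.
      rewrite e Sxm1 -e t1x Sx /=; lia.
    case: (eqVneq t.+1 C) => [t1C|t1C].
      have e : t = C.-1 by lia.
      rewrite e; case: (S C.-1) SCm1 => //= _ _; lia.
    lia.
  - rewrite big_nat_cond [X in _ <= X]big_nat_cond; apply: leq_sum => t /andP[ht _].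
    rewrite /S3 (_ : (t == C) = false); last by apply/eqP; lia.
    case: (eqVneq t x) => [->|tx].
      rewrite Sx !eqxx /= (_ : (x.+1 == x) = false); last by apply/eqP; lia.
      rewrite (_ : (x.+1 == C) = false); last by apply/eqP; lia.
      by rewrite Sx1.
    case: (eqVneq t.+1 x) => [t1x|t1x].
      by rewrite andbF.
    case: (eqVneq t.+1 C) => [t1C|t1C].
      have e : t = C.-1 by lia.
      by rewrite e; case: (S C.-1) SCm1.
    by [].
have := hU.2 S3 C.+1 sk3 ng3; lia.
Qed.


Theorem lemma6 (n : nat) (p r d : nat -> nat)
  (p_pos : forall j, 1 <= j <= n -> 1 <= p j)
  (d_incr : forall i j, 1 <= i -> i < j -> j <= n -> d i < d j)
  (r_inj : forall i j, 1 <= i <= n -> 1 <= j <= n -> r i = r j -> i = j)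
  (feas : feasible n p r d)
  (s k g : nat) (hs : 1 <= s <= n) (hk : k <= n)
  (S : nat -> option nat) (C : nat)
  (hS : sk_schedule n p r d s k S C) (hg : ngaps r s S C <= g)
  (u : nat) (hU : is_U n p r d s k g u) (hCu : C = u) :
  frugal r d s k S C.
Proof.
have hf1 := f1 p_pos d_incr feas hk hS hg hU hCu.
split => // hCd _ a b [ab hin hprev hnext]; split.
- move=> a0 [rsa Sa].
  apply: (shift d_incr hk hS hg hU hCu hf1 hCd (x := a)).
    by apply: hin; lia.
  by left.
- move=> [rsb Sb]; case: (eqVneq b C) => // bC; exfalso.
  have Sb1 : S b.-1 = Some k by apply: hin; lia.
  have [_ _ _ h] := skA hS Sb1.
  apply: (shift d_incr hk hS hg hU hCu hf1 hCd Sb1).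
  right; rewrite prednK; last lia.
  split => //; lia.
Qed.
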